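(* Let $P:\{-1,1\}^k\to\{0,1\}$ be a predicate such that there is no uniformly positively correlated probability distribution supported on $P^{-1}(1)$. Then there is a real polynomial $Q$ of degree at most $2$ in $x_1,\dots,x_k$ such that $Q(x)>E_Q^+$ for every $x\in P^{-1}(1)$. Furthermore, $Q$ can be chosen such that the maximum defining $E_Q^+$ is attained at a bias $r$ with $|r|<1$.
   Context: Boolean values are encoded as $\pm1$. For $Q:\{-1,1\}^k\to\mathbb{R}$ and $r\in[-1,1]$, $E_Q(r)=\mathbb{E}[Q(x)]$ where $x$ has independent coordinates each with expectation $r$ (i.e., $x_i=1$ with probability $(1+r)/2$), and $E_Q^+=\max_{r\in[-1,1]}E_Q(r)$. A distribution on $\{-1,1\}^k$ is uniformly positively correlated if there are $p,\rho\in[0,1]$ with $\rho\ge p^2$ such that $\Pr[x_i=1]=p$ for every $i$ and $\Pr[x_i=1\wedge x_j=1]=\rho$ for every $i<j$. *)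

(* Defs.v *)
From mathcomp Require Import all_boot all_order all_algebra.
From mathcomp Require Import reals.
Set Implicit Arguments. Unset Strict Implicit. Unset Printing Implicit Defensive.
Import Order.TTheory GRing.Theory Num.Theory.
Local Open Scope ring_scope.

(* The Boolean cube {-1,1}^k: a point is a finite function 'I_k -> bool,
   where true encodes +1 and false encodes -1. *)
Definition cube (k : nat) := {ffun 'I_k -> bool}.

Definition pm (R : ringType) (b : bool) : R := if b then 1 else -1.

Definition deg_le2 (R : ringType) (k : nat) (Q : cube k -> R) : Prop :=
  exists (c : R) (a : 'I_k -> R) (B : 'I_k -> 'I_k -> R),
    forall x : cube k,
      Q x = c + \sum_(i < k) a i * pm R (x i)
              + \sum_(i < k) \sum_(j < k) B i j * pm R (x i) * pm R (x j).

Definition biasprob (R : fieldType) (k : nat) (r : R) (x : cube k) : R :=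
  \prod_(i < k) (if x i then (1 + r) / 2 else (1 - r) / 2).

Definition EQ (R : fieldType) (k : nat) (Q : cube k -> R) (r : R) : R :=
  \sum_(x : cube k) biasprob r x * Q x.

Definition upc_supported (R : realFieldType) (k : nat) (P : cube k -> bool)
    (mu : cube k -> R) : Prop :=
  (forall x, 0 <= mu x) /\ \sum_(x : cube k) mu x = 1 /\
  (forall x, mu x != 0 -> P x) /\
  exists p rho : R,
    [/\ 0 <= p <= 1, 0 <= rho <= 1, p ^+ 2 <= rho,
        (forall i : 'I_k, \sum_(x : cube k | x i) mu x = p) &
        (forall i j : 'I_k, (i < j)%N -> \sum_(x : cube k | x i && x j) mu x = rho)].

(* Main.v *)
Require Import Defs.
From mathcomp Require Import all_boot all_order all_algebra.
From mathcomp Require Import reals.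
From mathcomp Require Import all_classical all_reals all_analysis.
From mathcomp Require Import ring lra.
Import Order.TTheory GRing.Theory Num.Theory.
Import numFieldNormedType.Exports.
Local Open Scope ring_scope.

Local Open Scope classical_set_scope.
Section T.
Variables (R : realType) (J : eqType).
Definition KK : J -> topologicalType := fun _ => R.
Definition TT : topologicalType := prod_topology KK.

Lemma cD (f g : TT -> R) : continuous f -> continuous g -> continuous (fun x => f x + g x).
Proof. by move=> cf cg x; exact: (continuousD (cf x) (cg x)). Qed.
Lemma cM (f g : TT -> R) : continuous f -> continuous g -> continuous (fun x => f x * g x).
Proof. by move=> cf cg x; exact: (continuousM (cf x) (cg x)). Qed.
Lemma cN (f : TT -> R) : continuous f -> continuous (fun x => - f x).
Proof. by move=> cf x; exact: (continuousN (cf x)). Qed.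
Lemma cC (c : R) : continuous (fun _ : TT => c).
Proof. exact: cst_continuous. Qed.
Lemma cP (j : J) : continuous (fun f : TT => (f j : R)).
Proof. move=> f. exact: (@proj_continuous J KK j f). Qed.
Lemma cS (I : Type) (r : seq I) (Pr : pred I) (F : I -> TT -> R) :
  (forall i, continuous (F i)) -> continuous (fun x => \sum_(i <- r | Pr i) F i x).
Proof.
move=> cF; elim: r => [|i r IH].
  by under eq_fun do rewrite big_nil; exact: cC.
under eq_fun do rewrite big_cons.
case: (Pr i); last exact: IH.
exact: cD.
Qed.

Lemma min_exists (A : J -> set R) (G : TT -> R) (S : set TT) :
  (forall j, compact (A j)) -> closed S ->
  (exists f : TT, (forall j, A j (f j)) /\ S f) -> continuous G ->
  exists2 f : TT, ((forall j, A j (f j)) /\ S f) & forall g : TT, ((forall j, A j (g j)) /\ S g) -> G f <= G g.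
Proof.
move=> cA cS' [f0 Hf0] cG.
have cpt : compact ([set f : TT | forall j, A j (f j)] `&` S).
  apply: compact_closedI => //. exact: (@tychonoff J KK A cA).
have [c /set_mem Hc Hmin] := compact_EVT_min (ex_intro _ f0 Hf0) cpt (continuous_subspaceT cG).
exists c => // g Hg; apply: Hmin; exact/mem_set.
Qed.

Lemma closed_sum (r : seq J) : closed [set f : TT | \sum_(j <- r) f j = 1].
Proof.
have -> : [set f : TT | \sum_(j <- r) f j = 1] = (fun f : TT => \sum_(j <- r) (f j : R)) @^-1` [set x | x = 1] by [].
apply: preimage_closed; last exact: closed_eq.
move=> x _; move: x; apply: (@cS _ r (fun _ => true) (fun j (f : TT) => (f j : R))) => j; exact: cP.
Qed.
End T.
Local Close Scope classical_set_scope.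
Section Alg.
Variable R : realType.

Lemma sq_expand (I : Type) (r : seq I) (Pr : pred I) (a d : I -> R) (t : R) :
  \sum_(i <- r | Pr i) (a i + t * d i) ^+ 2 =
  \sum_(i <- r | Pr i) a i ^+ 2 + t * (2 * \sum_(i <- r | Pr i) a i * d i
     + t * \sum_(i <- r | Pr i) d i ^+ 2).
Proof.
elim: r => [|i r IH]; first by rewrite !big_nil; ring.
rewrite !big_cons; case: (Pr i) => //; rewrite IH; ring.
Qed.

Lemma lin_expand (I : Type) (r : seq I) (Pr : pred I) (X Y Z : I -> R) (t : R) :
  \sum_(i <- r | Pr i) (X i + t * (2 * Y i + t * Z i)) =
  \sum_(i <- r | Pr i) X i + t * (2 * \sum_(i <- r | Pr i) Y i
     + t * \sum_(i <- r | Pr i) Z i).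
Proof.
elim: r => [|i r IH]; first by rewrite !big_nil; ring.
rewrite !big_cons; case: (Pr i) => //; rewrite IH; ring.
Qed.

Lemma lin1 (I : Type) (r : seq I) (Pr : pred I) (a b c : I -> R) (t : R) :
  \sum_(i <- r | Pr i) (a i + t * (b i - a i)) * c i =
  \sum_(i <- r | Pr i) a i * c i + t * (\sum_(i <- r | Pr i) b i * c i
     - \sum_(i <- r | Pr i) a i * c i).
Proof.
elim: r => [|i r IH]; first by rewrite !big_nil; ring.
rewrite !big_cons; case: (Pr i) => //; rewrite IH; ring.
Qed.

Lemma VI_lemma (F0 L M : R) : 0 <= M ->
  (forall t, 0 < t <= 1 -> F0 <= F0 + t * (2 * L + t * M)) -> 0 <= L.
Proof.
move=> M0 H; rewrite leNgt; apply/negP => L0.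
pose t := Num.min 1 (- L / (M + 1)).
have t0 : 0 < t by rewrite lt_min ltr01 /= divr_gt0 // ?oppr_gt0 //; lra.
have t1 : t <= 1 by rewrite ge_min lexx.
have t2 : t <= - L / (M + 1) by rewrite ge_min lexx orbT.
have := H t; rewrite t0 t1 => /(_ isT).
have tM : t * M <= - L.
  have : t * (M + 1) <= - L by rewrite -ler_pdivlMr //; lra.
  nra.
nra.
Qed.
End Alg.
Section Bias.
Variables (R : realType) (k : nat).

Lemma prod_pred1 (X : 'I_k -> R) (i : 'I_k) :
  \prod_l (if l == i then X l else 1) = X i.
Proof.
rewrite (bigD1 i) //= eqxx big1 ?mulr1 // => l /negbTE -> //.
Qed.

Lemma bp_prod (r : R) (h : 'I_k -> bool -> R) :
  \sum_(x : cube k) \prod_i ((if x i then (1+r)/2 else (1-r)/2) * h i (x i)) =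
  \prod_i ((1+r)/2 * h i true + (1-r)/2 * h i false).
Proof.
transitivity (\prod_i \sum_(b : bool) ((if b then (1+r)/2 else (1-r)/2) * h i b)).
  by rewrite bigA_distr_bigA /=.
by apply: eq_bigr => i _; rewrite big_bool.
Qed.

Lemma E1 (r : R) (i : 'I_k) : \sum_(x : cube k) biasprob r x * pm R (x i) = r.
Proof.
transitivity (\sum_(x : cube k) \prod_l ((if x l then (1+r)/2 else (1-r)/2) *
   (fun l b => if l == i then pm R b else 1) l (x l))).
  apply: eq_bigr => x _; rewrite big_split /=.
  by rewrite (prod_pred1 (fun l => pm R (x l))).
rewrite (bp_prod r (fun l b => if l == i then pm R b else 1)).
rewrite -[RHS](prod_pred1 (fun _ => r) i).
apply: eq_bigr => l _ /=; case: (l == i); rewrite /pm; by field.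
Qed.

Lemma E2 (r : R) (i j : 'I_k) : i != j ->
  \sum_(x : cube k) biasprob r x * (pm R (x i) * pm R (x j)) = r ^+ 2.
Proof.
move=> ij.
transitivity (\sum_(x : cube k) \prod_l ((if x l then (1+r)/2 else (1-r)/2) *
   (fun l b => (if l == i then pm R b else 1) * (if l == j then pm R b else 1)) l (x l))).
  apply: eq_bigr => x _; rewrite big_split /= big_split /=.
  by rewrite (prod_pred1 (fun l => pm R (x l))) (prod_pred1 (fun l => pm R (x l))).
rewrite (bp_prod r (fun l b => (if l == i then pm R b else 1) * (if l == j then pm R b else 1))).
transitivity (\prod_l ((if l == i then r else 1) * (if l == j then r else 1))).
  apply: eq_bigr => l _ /=.
  case: (eqVneq l i) => [->|li]; first by rewrite (negbTE ij) /pm; field.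
  case: (l == j); rewrite /pm; by field.
by rewrite big_split /= (prod_pred1 (fun _ => r)) (prod_pred1 (fun _ => r)) expr2.
Qed.
End Bias.

Section Main.
Variables (R : realType) (k : nat) (P : cube k -> bool).

Definition S1 (f : 'I_k -> R) := \sum_i f i.
Definition S2 (f : 'I_k -> 'I_k -> R) := \sum_(i : 'I_k) \sum_(j : 'I_k | (i < j)%N) f i j.
Definition m1 (mu : cube k -> R) (i : 'I_k) := \sum_(x : cube k) mu x * pm R (x i).
Definition m2 (mu : cube k -> R) (i j : 'I_k) :=
  \sum_(x : cube k) mu x * (pm R (x i) * pm R (x j)).
Definition Fr mu s v :=
  S1 (fun i => (m1 mu i - s) ^+ 2) + S2 (fun i j => (m2 mu i j - v) ^+ 2).
Definition adm (mu : cube k -> R) (s v : R) :=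
  [/\ (forall x, 0 <= mu x), (forall x, ~~ P x -> mu x = 0),
      \sum_(x : cube k) mu x = 1, -2 <= s <= 2 & s ^+ 2 <= v <= 5].
Definition Lvi mu0 s0 v0 mu s v :=
  S1 (fun i => (m1 mu0 i - s0) * ((m1 mu i - s) - (m1 mu0 i - s0))) +
  S2 (fun i j => (m2 mu0 i j - v0) * ((m2 mu i j - v) - (m2 mu0 i j - v0))).

Lemma adm_comb mu0 s0 v0 mu s v t : adm mu0 s0 v0 -> adm mu s v -> 0 <= t <= 1 ->
  adm (fun x => mu0 x + t * (mu x - mu0 x)) (s0 + t * (s - s0)) (v0 + t * (v - v0)).
Proof.
move=> [h1 h2 h3 h4 h5] [g1 g2 g3 g4 g5] /andP [t0 t1]; split.
- move=> x; have -> : mu0 x + t * (mu x - mu0 x) = (1 - t) * mu0 x + t * mu x by ring.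
  by apply: addr_ge0; apply: mulr_ge0 => //; rewrite subr_ge0.
- by move=> x Px; rewrite h2 // g2 // subrr mulr0 addr0.
- rewrite big_split /= h3 -mulr_sumr sumrB h3 g3; ring.
- move/andP: h4 => [? ?]; move/andP: g4 => [? ?]; apply/andP; split; nra.
- move/andP: h5 => [? ?]; move/andP: g5 => [? ?]; apply/andP; split; last by nra.
  have e : (v0 + t * (v - v0)) - (s0 + t * (s - s0)) ^+ 2 =
    (1 - t) * (v0 - s0 ^+ 2) + t * (v - s ^+ 2) + t * (1 - t) * (s - s0) ^+ 2 by ring.
  rewrite -subr_ge0 e; have t1' : 0 <= 1 - t by rewrite subr_ge0.
  apply: addr_ge0; first apply: addr_ge0.
  + by apply: mulr_ge0 => //; rewrite subr_ge0.
  + by apply: mulr_ge0 => //; rewrite subr_ge0.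
  + by apply: mulr_ge0; [exact: mulr_ge0 | exact: sqr_ge0].
Qed.

Lemma S2_expand (a d : 'I_k -> 'I_k -> R) (t : R) :
  \sum_(i : 'I_k) \sum_(j : 'I_k | (i < j)%N) (a i j + t * d i j) ^+ 2 =
  \sum_(i : 'I_k) \sum_(j : 'I_k | (i < j)%N) a i j ^+ 2 +
  t * (2 * \sum_(i : 'I_k) \sum_(j : 'I_k | (i < j)%N) a i j * d i j +
  t * \sum_(i : 'I_k) \sum_(j : 'I_k | (i < j)%N) d i j ^+ 2).
Proof.
rewrite (eq_bigr _ (fun i _ => sq_expand _ _ _ _ (a i) (d i) t)).
by rewrite lin_expand.
Qed.

Lemma Fr_comb mu0 s0 v0 mu s v t :
  Fr (fun x => mu0 x + t * (mu x - mu0 x)) (s0 + t * (s - s0)) (v0 + t * (v - v0)) =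
  Fr mu0 s0 v0 + t * (2 * Lvi mu0 s0 v0 mu s v +
     t * (S1 (fun i => ((m1 mu i - s) - (m1 mu0 i - s0)) ^+ 2) +
          S2 (fun i j => ((m2 mu i j - v) - (m2 mu0 i j - v0)) ^+ 2))).
Proof.
rewrite /Fr /Lvi /S1 /S2.
have e1 i : m1 (fun x => mu0 x + t * (mu x - mu0 x)) i - (s0 + t * (s - s0)) =
   (m1 mu0 i - s0) + t * ((m1 mu i - s) - (m1 mu0 i - s0)).
  rewrite /m1 lin1; ring.
have e2 i j : m2 (fun x => mu0 x + t * (mu x - mu0 x)) i j - (v0 + t * (v - v0)) =
   (m2 mu0 i j - v0) + t * ((m2 mu i j - v) - (m2 mu0 i j - v0)).
  rewrite /m2 lin1; ring.
rewrite (eq_bigr _ (fun i _ => congr1 (fun z => z ^+ 2) (e1 i))).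
rewrite (eq_bigr _ (fun i _ => eq_bigr _ (fun j _ => congr1 (fun z => z ^+ 2) (e2 i j)))).
rewrite sq_expand S2_expand; ring.
Qed.

Lemma VI mu0 s0 v0 : adm mu0 s0 v0 ->
  (forall mu s v, adm mu s v -> Fr mu0 s0 v0 <= Fr mu s v) ->
  forall mu s v, adm mu s v -> 0 <= Lvi mu0 s0 v0 mu s v.
Proof.
move=> a0 hmin mu s v a.
pose M := S1 (fun i => ((m1 mu i - s) - (m1 mu0 i - s0)) ^+ 2) +
          S2 (fun i j => ((m2 mu i j - v) - (m2 mu0 i j - v0)) ^+ 2).
apply: (@VI_lemma R (Fr mu0 s0 v0) _ M).
  apply: addr_ge0.
    by apply: sumr_ge0 => i _; exact: sqr_ge0.
  by apply: sumr_ge0 => i _; apply: sumr_ge0 => j _; exact: sqr_ge0.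
move=> t /andP [t0 t1]; rewrite /M -Fr_comb; apply: hmin; apply: adm_comb => //.
by rewrite ltW.
Qed.

Lemma S12_eq (a c e g : 'I_k -> R) (b d f h : 'I_k -> 'I_k -> R) :
  (forall i, a i = c i - e i - g i) -> (forall i j, b i j = d i j - f i j - h i j) ->
  S1 a + S2 b = (S1 c + S2 d) - ((S1 e + S2 f) + S1 g + S2 h).
Proof.
move=> Ha Hb.
have E1 : S1 a = S1 c - S1 e - S1 g.
  by rewrite /S1 -!sumrB; apply: eq_bigr => i _; rewrite Ha.
have E2 : S2 b = S2 d - S2 f - S2 h.
  rewrite /S2 -!sumrB; apply: eq_bigr => i _; rewrite -!sumrB.
  by apply: eq_bigr => j _; rewrite Hb.
rewrite E1 E2; ring.
Qed.

Lemma delta_sum (x : cube k) (c : cube k -> R) :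
  \sum_(y : cube k) (if y == x then 1 else 0) * c y = c x.
Proof.
rewrite (bigD1 x) //= eqxx mul1r big1 ?addr0 // => y /negbTE ->; by rewrite mul0r.
Qed.

Lemma ind1 (mu : cube k -> R) (i : 'I_k) :
  \sum_(x : cube k | x i) mu x = (\sum_(x : cube k) mu x + m1 mu i) / 2.
Proof.
rewrite /m1 -big_split /= mulr_suml big_mkcond /=; apply: eq_bigr => x _.
by case: (x i); rewrite /pm; field.
Qed.

Lemma ind2 (mu : cube k -> R) (i j : 'I_k) :
  \sum_(x : cube k | x i && x j) mu x =
  (\sum_(x : cube k) mu x + m1 mu i + m1 mu j + m2 mu i j) / 4.
Proof.
rewrite /m1 /m2 -!big_split /= mulr_suml big_mkcond /=; apply: eq_bigr => x _.
by case: (x i); case: (x j); rewrite /pm /=; field.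
Qed.

Lemma mbound (mu c : cube k -> R) : (forall x, 0 <= mu x) -> \sum_(x : cube k) mu x = 1 ->
  (forall x, -1 <= c x <= 1) -> -1 <= \sum_(x : cube k) mu x * c x <= 1.
Proof.
move=> h0 h1 hc; apply/andP; split.
  rewrite -h1 -sumrN; apply: ler_sum => x _; have := h0 x; have := hc x; nra.
rewrite -h1; apply: ler_sum => x _; have := h0 x; have := hc x; nra.
Qed.

Lemma pm_bound (b : bool) : -1 <= pm R b <= 1.
Proof. by case: b; rewrite /pm; apply/andP; split; lra. Qed.

Lemma m1_bound mu i : (forall x, 0 <= mu x) -> \sum_(x : cube k) mu x = 1 -> -1 <= m1 mu i <= 1.
Proof. by move=> h0 h1; apply: mbound => // x; apply: pm_bound. Qed.

Lemma m2_bound mu i j : (forall x, 0 <= mu x) -> \sum_(x : cube k) mu x = 1 -> -1 <= m2 mu i j <= 1.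
Proof.
move=> h0 h1; apply: mbound => // x.
by case: (x i); case: (x j); rewrite /pm; apply/andP; split; lra.
Qed.

Definition Qf (w : 'I_k -> R) (w2 : 'I_k -> 'I_k -> R) (x : cube k) :=
  S1 (fun i => w i * pm R (x i)) + S2 (fun i j => w2 i j * (pm R (x i) * pm R (x j))).

Lemma Qf_deg w w2 : deg_le2 (Qf w w2).
Proof.
exists 0, w, (fun i j : 'I_k => if (i < j)%N then w2 i j else 0) => x.
rewrite /Qf add0r; congr (_ + _); rewrite /S2; apply: eq_bigr => i _.
rewrite big_mkcond; apply: eq_bigr => j _; case: ifP => _; ring.
Qed.

Lemma Qf_EQ w w2 r : EQ (Qf w w2) r = S1 w * r + S2 w2 * r ^+ 2.
Proof.
rewrite /EQ /Qf; under eq_bigr do rewrite mulrDr; rewrite big_split /=.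
congr (_ + _).
  rewrite /S1 mulr_suml; under eq_bigr do rewrite mulr_sumr.
  rewrite exchange_big; apply: eq_bigr => i _ /=.
  transitivity (w i * \sum_(x : cube k) biasprob r x * pm R (x i)); last by rewrite E1.
  rewrite mulr_sumr; apply: eq_bigr => x _; by rewrite mulrCA.
rewrite /S2 mulr_suml; under eq_bigr do rewrite mulr_sumr.
rewrite exchange_big; apply: eq_bigr => i _ /=.
rewrite mulr_suml; under eq_bigr do rewrite mulr_sumr.
rewrite exchange_big; apply: eq_bigr => j ij /=.
have nij : i != j by apply/eqP => e; move: ij; rewrite e ltnn.
transitivity (w2 i j * \sum_(x : cube k) biasprob r x * (pm R (x i) * pm R (x j))); last by rewrite E2.
rewrite mulr_sumr; apply: eq_bigr => x _; by rewrite mulrCA.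
Qed.

Lemma main_from_min mu0 s0 v0 : adm mu0 s0 v0 ->
  (forall mu s v, adm mu s v -> Fr mu0 s0 v0 <= Fr mu s v) ->
  ~ (exists mu : cube k -> R, upc_supported P mu) ->
  exists Q : cube k -> R, deg_le2 Q /\
    exists r0 : R,
      [/\ -1 < r0 < 1,
          (forall r : R, -1 <= r <= 1 -> EQ Q r <= EQ Q r0) &
          (forall x : cube k, P x -> EQ Q r0 < Q x)].
Proof.
move=> a0 hmin nupc.
have vi := VI _ _ _ a0 hmin.
case: (a0) => h1 h2 h3 h4 h5.
pose w i := m1 mu0 i - s0.
pose w2 i j := m2 mu0 i j - v0.
pose A := S1 w. pose B := S2 w2.
pose F := Fr mu0 s0 v0.
have VIb : forall s v, -2 <= s <= 2 -> s ^+ 2 <= v <= 5 -> 0 <= A * (s0 - s) + B * (v0 - v).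
  move=> s v hs hv.
  have := vi mu0 s v (And5 h1 h2 h3 hs hv).
  suff -> : Lvi mu0 s0 v0 mu0 s v = A * (s0 - s) + B * (v0 - v) by [].
  rewrite /Lvi /A /B /S1 /S2 !mulr_suml; congr (_ + _).
    by apply: eq_bigr => i _; rewrite /w; ring.
  apply: eq_bigr => i _; rewrite mulr_suml; apply: eq_bigr => j _; rewrite /w2; ring.
have VIa : forall x, P x -> F + A * s0 + B * v0 <= Qf w w2 x.
  move=> x Px.
  pose d y : R := if y == x then 1 else 0.
  have ad : adm d s0 v0.
    split => //.
    - by move=> y; rewrite /d; case: (y == x) => //; lra.
    - move=> y Py; rewrite /d; case: eqP => // e; by move: Py; rewrite e Px.
    - by rewrite (bigD1 x) //= /d eqxx big1 ?addr0 // => y /negbTE ->.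
  have := vi d s0 v0 ad.
  suff -> : Lvi mu0 s0 v0 d s0 v0 = Qf w w2 x - (F + A * s0 + B * v0) by rewrite subr_ge0.
  rewrite /Lvi /Qf /F /Fr /A /B.
  have -> : S1 w * s0 = S1 (fun i => w i * s0) by rewrite /S1 mulr_suml.
  have -> : S2 w2 * v0 = S2 (fun i j => w2 i j * v0).
    by rewrite /S2 mulr_suml; apply: eq_bigr => i _; rewrite mulr_suml.
  apply: S12_eq => [i|i j].
    have md : m1 d i = pm R (x i) by exact: (delta_sum x (fun y => pm R (y i))).
    by rewrite md /w; ring.
  have md : m2 d i j = pm R (x i) * pm R (x j).
    by exact: (delta_sum x (fun y => pm R (y i) * pm R (y j))).
  by rewrite md /w2; ring.
have F0 : 0 <= F.
  apply: addr_ge0.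
    by apply: sumr_ge0 => i _; exact: sqr_ge0.
  by apply: sumr_ge0 => i _; apply: sumr_ge0 => j _; exact: sqr_ge0.
have Fpos : 0 < F.
  rewrite lt_neqAle F0 andbT; apply/negP => /eqP F0'.
  apply: nupc; exists mu0.
  have S1g : 0 <= S1 (fun i => (m1 mu0 i - s0) ^+ 2) by apply: sumr_ge0 => i _; exact: sqr_ge0.
  have S2g : 0 <= S2 (fun i j => (m2 mu0 i j - v0) ^+ 2).
    by apply: sumr_ge0 => i _; apply: sumr_ge0 => j _; exact: sqr_ge0.
  have : F == 0 by rewrite -F0'.
  rewrite /F /Fr paddr_eq0 // => /andP [/eqP e1 /eqP e2].
  have em1 i : m1 mu0 i = s0.
    have := psumr_eq0P (fun i _ => sqr_ge0 (m1 mu0 i - s0)) e1 (i := i) isT.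
    by move/eqP; rewrite sqrf_eq0 subr_eq0 => /eqP.
  have em2 (i j : 'I_k) : (i < j)%N -> m2 mu0 i j = v0.
    move=> ij.
    have e3 := psumr_eq0P (fun i _ => sumr_ge0 _ (fun j _ => sqr_ge0 (m2 mu0 i j - v0))) e2 (i := i) isT.
    have := psumr_eq0P (fun j _ => sqr_ge0 (m2 mu0 i j - v0)) e3 (i := j) ij.
    by move/eqP; rewrite sqrf_eq0 subr_eq0 => /eqP.
  pose sc := if s0 < -1 then -1 else if 1 < s0 then 1 else s0.
  pose vc := if v0 < 1 then v0 else 1.
  have sc1 : -1 <= sc <= 1 by rewrite /sc; case: ltrP => ?; [|case: ltrP => ?]; apply/andP; split; lra.
  have sc2 : sc ^+ 2 <= vc.
    move/andP: h5 => [hv _]; rewrite /vc /sc.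
    case: ltrP => ?; case: ltrP => ?; try case: ltrP => ?; nra.
  have vc1 : vc <= 1 by rewrite /vc; case: ltrP => ?; lra.
  have scE : (0 < k)%N -> sc = s0.
    move=> k0; have := m1_bound mu0 (Ordinal k0) h1 h3; rewrite em1 => /andP [? ?].
    rewrite /sc; case: ltrP => ?; [lra|]; case: ltrP => ?; lra.
  do 2 (split => //); split.
    by move=> x; apply: contraNT => Px; rewrite h2.
  exists ((1 + sc) / 2), ((1 + 2 * sc + vc) / 4).
  move/andP: sc1 => [sa sb].
  split.
  - apply/andP; split; lra.
  - apply/andP; split; nra.
  - nra.
  - move=> i; rewrite ind1 h3 em1 scE //; by apply: (leq_ltn_trans (leq0n i)).
  - move=> i j ij; rewrite ind2 h3 em1 em1 em2 // scE; last by apply: (leq_ltn_trans (leq0n i)).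
    have := m2_bound mu0 i j h1 h3; rewrite em2 // => /andP [? ?].
    have -> : vc = v0 by rewrite /vc; case: ltrP => ?; lra.
    by congr (_ / _); ring.
have m1b i : -1 <= m1 mu0 i <= 1 by apply: m1_bound.
have m2b i j : -1 <= m2 mu0 i j <= 1 by apply: m2_bound.
have Ble : B <= 0.
  have := VIb s0 5 h4; move/andP: h5 => [hv1 hv2].
  rewrite subrr mulr0 add0r => hB.
  case: (ltrP v0 5) => hv; first nra.
  have v5 : v0 = 5 by lra.
  rewrite /B /S2; apply: sumr_le0 => i _; apply: sumr_le0 => j _.
  rewrite /w2 v5; have := m2b i j; lra.
exists (Qf w w2); split; first exact: Qf_deg.
have EQE r : EQ (Qf w w2) r = A * r + B * r ^+ 2 by rewrite Qf_EQ.
case: (ltrP B 0) => hB; last first.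
  have B0 : B = 0 by lra.
  have A0 : A = 0.
    have := VIb 2 5; have := VIb (-2) 5.
    rewrite B0 !mul0r !addr0 => H1 H2.
    have H1' := H1 ltac:(apply/andP; split; lra) ltac:(apply/andP; split; lra).
    have H2' := H2 ltac:(apply/andP; split; lra) ltac:(apply/andP; split; lra).
    move/andP: h4 => [h41 h42].
    have Ap : 0 <= A.
      case: (ltrP (-2) s0) => hs3.
        by nra.
      have s2 : s0 = -2 by lra.
      rewrite /A /S1; apply: sumr_ge0 => i _; rewrite /w s2; have := m1b i; lra.
    have An : A <= 0.
      case: (ltrP s0 2) => hs3.
        nra.
      have s2 : s0 = 2 by lra.
      rewrite /A /S1; apply: sumr_le0 => i _; rewrite /w s2; have := m1b i; lra.
    lra.
  exists 0; split.
  - apply/andP; split; lra.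
  - by move=> r _; rewrite !EQE A0 B0; lra.
  - move=> x Px; rewrite EQE A0 B0; have := VIa x Px; rewrite A0 B0; lra.
have vs : v0 = s0 ^+ 2.
  have := VIb s0 (s0 ^+ 2) h4; rewrite subrr mulr0 add0r.
  move/andP: h5 => [hv1 hv2] H.
  have := H ltac:(apply/andP; split; [lra | move/andP: h4 => [? ?]; nra]).
  nra.
have key : forall r, -2 <= r <= 2 -> A * r + B * r ^+ 2 <= A * s0 + B * s0 ^+ 2.
  move=> r hr; have := VIb r (r ^+ 2) hr.
  have : r ^+ 2 <= 5 by move/andP: hr => [? ?]; nra.
  move=> hr2 /(_ ltac:(apply/andP; split; lra)); rewrite vs; lra.
have hs : -1 < s0 < 1.
  have H0 : 0 <= A * s0 + B * s0 ^+ 2.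
    by have := key 0 ltac:(apply/andP; split; lra); rewrite mulr0 expr0n /= mulr0 addr0.
  apply/andP; split.
  - rewrite ltNge; apply/negP => hs1.
    have : 0 <= A.
      rewrite /A /S1; apply: sumr_ge0 => i _; rewrite /w; have := m1b i; lra.
    have : 0 < s0 ^+ 2 by nra.
    nra.
  - rewrite ltNge; apply/negP => hs1.
    have : A <= 0.
      rewrite /A /S1; apply: sumr_le0 => i _; rewrite /w; have := m1b i; lra.
    have : 0 < s0 ^+ 2 by nra.
    nra.
exists s0; split => //.
- move=> r /andP [r1 r2]; rewrite !EQE; apply: key; apply/andP; split; lra.
- move=> x Px; rewrite EQE; have := VIa x Px; rewrite -vs; lra.
Qed.

End Main.

Local Open Scope classical_set_scope.
Section Ex.
Variables (R : realType) (k : nat) (P : cube k -> bool).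
Local Notation admP := (@adm R k P).
Local Notation FrR := (@Fr R k).

Lemma cX2 (J : eqType) (f : TT R J -> R) : continuous f -> continuous (fun x => f x ^+ 2).
Proof. by move=> cf; under eq_fun do rewrite expr2; exact: cM. Qed.

Lemma le_sum_one (mu : cube k -> R) x : (forall y, 0 <= mu y) -> mu x <= \sum_(y : cube k) mu y.
Proof.
move=> h; rewrite (bigD1 x) //= lerDl; apply: sumr_ge0 => y _; exact: h.
Qed.

Lemma exists_min (x0 : cube k) : P x0 ->
  exists mu s v, admP mu s v /\
    forall mu' s' v', admP mu' s' v' -> FrR mu s v <= FrR mu' s' v'.
Proof.
move=> Px0.
pose J := option (option (cube k)).
pose A : J -> set R := fun j => match j with
  | None => `[-2, 2]%classic
  | Some None => `[0, 1]%classic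
  | Some (Some x) => if P x then `[0, 1]%classic else `[0, 0]%classic end.
pose toV (f : TT R J) := f None ^+ 2 + f (Some None) * (5 - f None ^+ 2).
pose G (f : TT R J) := FrR (fun x => f (Some (Some x))) (f None) (toV f).
pose S := [set f : TT R J | \sum_(x : cube k) f (Some (Some x)) = 1]%classic.
have cA : forall j, compact (A j).
  by case=> [[x|]|] /=; rewrite ?(fun_if compact); try case: (P x); apply: segment_compact.
have clS : closed S.
  have -> : S = (fun f : TT R J => \sum_(x : cube k) f (Some (Some x))) @^-1` [set y | y = 1]%classic by [].
  apply: preimage_closed; last exact: closed_eq.
  move=> f _; move: f; apply: cS => x; exact: cP.
have cG : continuous G.
  rewrite /G /Fr /S1 /S2 /m1 /m2 /toV.
  apply: cD.
    apply: cS => i; apply: cX2; apply: cD; last by apply: cN; exact: cP.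
    apply: cS => x; apply: cM; [exact: cP | exact: cC].
  apply: cS => i; apply: cS => j; apply: cX2; apply: cD; last first.
    apply: cN; apply: cD; first by apply: cX2; exact: cP.
    apply: cM; first exact: cP.
    apply: cD; [exact: cC | apply: cN; apply: cX2; exact: cP].
  apply: cS => x; apply: cM; [exact: cP | exact: cC].
have ne : exists f : TT R J, (forall j, A j (f j)) /\ S f.
  exists (fun j : J => match j with None => 0 | Some None => 0
                     | Some (Some x) => if x == x0 then 1 else 0 end : R).
  split.
    case=> [[x|]|] /=; rewrite /= ?in_itv /=.
    - case: (eqVneq x x0) => [->|nx].
        by rewrite Px0 /= in_itv /=; apply/andP; split; lra.
      by case: (P x); rewrite /= in_itv /=; apply/andP; split; lra.
    - by apply/andP; split; lra.
    - by apply/andP; split; lra.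
  rewrite /S /= (bigD1 x0) //= eqxx big1 ?addr0 // => y /negbTE -> //.
have [f [fA fS] fmin] := @min_exists R J A G S cA clS ne cG.
have fbox j : A j (f j) := fA j.
have hmu x : 0 <= f (Some (Some x)) <= (if P x then 1 else 0).
  have := fbox (Some (Some x)); rewrite /A; case: (P x); by rewrite /= in_itv.
have hs : -2 <= f None <= 2 by have := fbox None; rewrite /A /= in_itv.
have hu : 0 <= f (Some None) <= 1 by have := fbox (Some None); rewrite /A /= in_itv.
have admf : admP (fun x => f (Some (Some x))) (f None) (toV f).
  split.
  - by move=> x; case/andP: (hmu x).
  - by move=> x /negbTE Px; have := hmu x; rewrite Px => /andP [? ?]; apply/eqP; rewrite eq_le; apply/andP; split.
  - exact: fS.
  - exact: hs.
  - rewrite /toV; move/andP: hs => [? ?]; move/andP: hu => [? ?].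
    have : f None ^+ 2 <= 4 by nra.
    move=> h4; apply/andP; split; nra.
exists (fun x => f (Some (Some x))), (f None), (toV f); split => //.
move=> mu' s' v' [g1 g2 g3 g4 g5].
move/andP: g4 => [g41 g42]; move/andP: g5 => [g51 g52].
have d0 : 0 < 5 - s' ^+ 2 by nra.
pose g := (fun j : J => match j with None => s' | Some None => (v' - s' ^+ 2) / (5 - s' ^+ 2)
                     | Some (Some x) => mu' x end : R).
have gA : forall j, A j (g j).
  case=> [[x|]|] /=; rewrite /= ?in_itv /=.
  - case E : (P x); rewrite /= in_itv /=.
      by rewrite g1 /= -g3; apply: le_sum_one.
    by rewrite g2 ?E // lexx.
  - apply/andP; split; first by apply: divr_ge0; lra.
    by rewrite ler_pdivrMr // mul1r; lra.
  - by apply/andP; split.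
have gS : S g by exact: g3.
have := fmin g (conj gA gS).
rewrite /G /toV /=.
suff -> : s' ^+ 2 + (v' - s' ^+ 2) / (5 - s' ^+ 2) * (5 - s' ^+ 2) = v' by [].
by field; lra.
Qed.
End Ex.
Local Close Scope classical_set_scope.
Local Open Scope ring_scope.

Theorem theorem6p4 (R : realType) (k : nat) (P : cube k -> bool) :
  ~ (exists mu : cube k -> R, upc_supported P mu) ->
  exists Q : cube k -> R, deg_le2 Q /\
    exists r0 : R,
      [/\ -1 < r0 < 1,
          (* E_Q^+ = max_{r in [-1,1]} E_Q(r) is attained at r0 *)
          (forall r : R, -1 <= r <= 1 -> EQ Q r <= EQ Q r0) &
          (forall x : cube k, P x -> EQ Q r0 < Q x)].
Proof.
move=> nupc.
case: (pselect (exists x0, P x0)) => [[x0 Px0]|noX].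
  have [mu [s [v [a hmin]]]] := @exists_min R k P x0 Px0.
  exact: (@main_from_min R k P mu s v a hmin nupc).
exists (fun _ => 0); split.
  exists 0, (fun _ => 0), (fun _ _ => 0) => x.
  have e1 : \sum_(i < k) (fun _ => 0 : R) i * pm R (x i) = 0 by apply: big1 => i _; rewrite mul0r.
  have e2 : \sum_(i < k) \sum_(j < k) (fun _ _ => 0 : R) i j * pm R (x i) * pm R (x j) = 0.
    by apply: big1 => i _; apply: big1 => j _; rewrite !mul0r.
  by rewrite e1 e2 !addr0.
have E0 r : EQ (fun _ : cube k => (0 : R)) r = 0.
  by rewrite /EQ big1 // => x _; rewrite mulr0.
exists 0; split.
- by apply/andP; split; lra.
- by move=> r _; rewrite !E0.
- by move=> x Px; exfalso; apply: noX; exists x.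
Qed.
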